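(* Let $D_1,D_2\subset\mathbb{C}^2$ be bounded balanced domains with Minkowski functions $\mu_1,\mu_2$ respectively. For $i=1,2$ let $L_{i,1},L_{i,2},L_{i,3}$ be three pairwise different complex lines through the origin in $\mathbb{C}^2$ (one-dimensional complex linear subspaces). Let $T:\mathbb{C}^2\to\mathbb{C}^2$ be an $\mathbb{R}$-linear map such that $\mu_1(X)=\mu_2(T(X))$ for all $X\in\mathbb{C}^2$ and $T(L_{1,1}\cup L_{1,2}\cup L_{1,3})=L_{2,1}\cup L_{2,2}\cup L_{2,3}$. Then $T$ is $\mathbb{C}$-linear or anti-$\mathbb{C}$-linear.
   Context: A domain $D\subset\mathbb{C}^n$ is balanced if $\lambda z\in D$ for all $z\in D$ and $\lambda\in\mathbb{C}$ with $|\lambda|\le 1$. Its Minkowski function is $\mu(X)=\inf\{t>0: X/t\in D\}$. An $\mathbb{R}$-linear map $T$ is anti-$\mathbb{C}$-linear if $T(\lambda X)=\bar\lambda T(X)$ for all $\lambda\in\mathbb{C}$. *)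

(* Defs.v *)
From Stdlib Require Import Reals.
From Coquelicot Require Export Coquelicot.
Open Scope R_scope.

(* C^2, with the product (sup-metric) uniform structure: same topology as usual. *)
Definition C2 : UniformSpace := prod_UniformSpace C_UniformSpace C_UniformSpace.

Definition c2add (X Y : C2) : C2 := (Cplus (fst X) (fst Y), Cplus (snd X) (snd Y)).
Definition c2scal (l : C) (X : C2) : C2 := (Cmult l (fst X), Cmult l (snd X)).
Definition c2zero : C2 := (RtoC 0, RtoC 0).

Definition connected_set (D : C2 -> Prop) : Prop :=
  forall U V : C2 -> Prop, open U -> open V ->
    (forall x, D x -> U x \/ V x) ->
    (forall x, D x -> U x -> V x -> False) ->
    (exists x, D x /\ U x) -> (exists x, D x /\ V x) -> False.

Definition is_domain (D : C2 -> Prop) : Prop :=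
  (exists x, D x) /\ open D /\ connected_set D.

Definition bounded_set (D : C2 -> Prop) : Prop :=
  exists M : R, forall X, D X -> Cmod (fst X) <= M /\ Cmod (snd X) <= M.

Definition balanced (D : C2 -> Prop) : Prop :=
  forall X (l : C), D X -> Cmod l <= 1 -> D (c2scal l X).

Definition minkowski (D : C2 -> Prop) (X : C2) : Rbar :=
  Glb_Rbar (fun t => 0 < t /\ D (c2scal (RtoC (/ t)) X)).

Definition complex_line (L : C2 -> Prop) : Prop :=
  exists v : C2, v <> c2zero /\ forall X, L X <-> exists l : C, X = c2scal l v.

Definition R_linear (T : C2 -> C2) : Prop :=
  (forall X Y, T (c2add X Y) = c2add (T X) (T Y)) /\
  (forall (r : R) X, T (c2scal (RtoC r) X) = c2scal (RtoC r) (T X)).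

Definition C_linear (T : C2 -> C2) : Prop :=
  (forall X Y, T (c2add X Y) = c2add (T X) (T Y)) /\
  (forall (l : C) X, T (c2scal l X) = c2scal l (T X)).

Definition anti_C_linear (T : C2 -> C2) : Prop :=
  (forall X Y, T (c2add X Y) = c2add (T X) (T Y)) /\
  (forall (l : C) X, T (c2scal l X) = c2scal (Cconj l) (T X)).

(* Main.v *)
Require Import Defs.
From Stdlib Require Import Reals Lra.
From Coquelicot Require Import Coquelicot.
From Stdlib Require Import FunctionalExtensionality PropExtensionality Classical.
Open Scope R_scope.

Lemma c2_ext (X Y : C2) : @eq C (fst X) (fst Y) -> @eq C (snd X) (snd Y) -> X = Y.
Proof. destruct X, Y; simpl; intros; subst; auto. Qed.

Ltac c2ring := apply c2_ext; cbn [fst snd c2add c2scal c2zero]; ring.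

Lemma c2scal_scal a b X : c2scal a (c2scal b X) = c2scal (a * b)%C X.
Proof. unfold c2scal; c2ring. Qed.

Definition S (D : C2 -> Prop) (X : C2) := fun t => 0 < t /\ D (c2scal (RtoC (/ t)) X).

Lemma bal_unit D u X : balanced D -> Cmod u = 1 -> D (c2scal u X) -> D X.
Proof.
  intros HB Hu H.
  assert (E : X = c2scal (Cconj u) (c2scal u X)).
  { rewrite c2scal_scal.
    assert (Cconj u * u = 1)%C as ->.
    { rewrite Cmult_comm, <- Cmod2_conj, Hu. apply injective_projections; simpl; ring. }
    unfold c2scal; apply c2_ext; simpl; ring. }
  rewrite E. apply HB; auto. rewrite Cmod_conj, Hu; lra.
Qed.

Lemma zero_in D : is_domain D -> balanced D -> D c2zero.
Proof.
  intros [[x0 Hx] _] HB.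
  assert (E : c2zero = c2scal (RtoC 0) x0).
  { unfold c2scal, c2zero; apply c2_ext; simpl; apply injective_projections; simpl; ring. }
  rewrite E; apply HB; auto. rewrite Cmod_R, Rabs_R0; lra.
Qed.

Lemma ball_R (e a a' : R) : Rabs (a' - a) < e -> ball a e a'.
Proof. intros H. exact H. Qed.

Lemma small_comp (eps K t x : R) : 0 < eps -> Rabs x < K -> t = 2 * K / eps ->
  Rabs (/ t * x) < eps.
Proof.
  intros He Hx Ht.
  assert (HK : 0 < K) by (pose proof (Rabs_pos x); lra).
  replace (/ t * x) with (x * (eps / (2 * K))) by (subst; field; lra).
  rewrite Rabs_mult, (Rabs_pos_eq (eps / (2*K))).
  2:{ apply Rlt_le, Rdiv_lt_0_compat; lra. }
  apply Rlt_le_trans with (K * (eps / (2 * K))).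
  - apply Rmult_lt_compat_r; auto. apply Rdiv_lt_0_compat; lra.
  - assert (K * (eps / (2 * K)) = eps / 2) as -> by (field; lra). lra.
Qed.

Lemma nbhd0 D X : is_domain D -> balanced D -> exists t, S D X t.
Proof.
  intros HD HB. pose proof (zero_in D HD HB) as H0.
  destruct HD as [_ [Ho _]].
  destruct (Ho _ H0) as [eps Heps].
  destruct X as [[x1 y1] [x2 y2]].
  set (K := Rabs x1 + Rabs y1 + Rabs x2 + Rabs y2 + 1).
  assert (HK : 0 < K) by (unfold K; pose proof (Rabs_pos x1); pose proof (Rabs_pos y1);
     pose proof (Rabs_pos x2); pose proof (Rabs_pos y2); lra).
  pose proof (cond_pos eps) as He.
  exists (2 * K / eps). split. apply Rdiv_lt_0_compat; lra.
  apply Heps. unfold c2scal, c2zero, ball; simpl. unfold prod_ball; simpl.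
  pose proof (Rabs_pos x1); pose proof (Rabs_pos y1);
     pose proof (Rabs_pos x2); pose proof (Rabs_pos y2).
  split; split; apply ball_R; unfold Cmult, RtoC; simpl.
  - replace (/ (2 * K / eps) * x1 - 0 * y1 - 0) with (/ (2 * K / eps) * x1) by ring.
    apply small_comp with K; auto; unfold K; lra.
  - replace (/ (2 * K / eps) * y1 + 0 * x1 - 0) with (/ (2 * K / eps) * y1) by ring.
    apply small_comp with K; auto; unfold K; lra.
  - replace (/ (2 * K / eps) * x2 - 0 * y2 - 0) with (/ (2 * K / eps) * x2) by ring.
    apply small_comp with K; auto; unfold K; lra.
  - replace (/ (2 * K / eps) * y2 + 0 * x2 - 0) with (/ (2 * K / eps) * y2) by ring.
    apply small_comp with K; auto; unfold K; lra.
Qed.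


Lemma Cmod_fst_le (z : C) (M t : R) : 0 < t -> Cmod (RtoC (/ t) * z)%C <= M -> Cmod z <= M * t.
Proof.
  intros Ht H. rewrite Cmod_mult, Cmod_R, Rabs_pos_eq in H by (left; apply Rinv_0_lt_compat; auto).
  apply Rmult_le_compat_r with (r := t) in H; [|lra].
  replace (/ t * Cmod z * t) with (Cmod z) in H by (field; lra). exact H.
Qed.

Lemma mu_fin D X : is_domain D -> bounded_set D -> balanced D ->
  exists g, is_glb_Rbar (S D X) (Finite g) /\ 0 <= g /\ (X <> c2zero -> 0 < g).
Proof.
  intros HD [M HM] HB.
  destruct (Glb_Rbar_correct (S D X)) as [Hlb Hgr].
  destruct (nbhd0 D X HD HB) as [t0 Ht0].
  pose proof (Hlb _ Ht0) as H1.
  assert (H2 : Rbar_le (Finite 0) (Glb_Rbar (S D X))).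
  { apply Hgr. intros x [Hx _]. simpl. lra. }
  pose proof (Glb_Rbar_correct (S D X)) as Hc.
  destruct (Glb_Rbar (S D X)) as [g| |]; simpl in H1, H2; try contradiction.
  exists g. split; [exact Hc|]. split; [exact H2|].
  intros HX.
  set (m := Cmod (fst X) + Cmod (snd X)).
  assert (Hm : 0 < m).
  { unfold m. pose proof (Cmod_ge_0 (fst X)); pose proof (Cmod_ge_0 (snd X)).
    destruct (Req_dec (Cmod (fst X)) 0) as [E1|E1]; [|lra].
    destruct (Req_dec (Cmod (snd X)) 0) as [E2|E2]; [|lra].
    exfalso; apply HX. apply Cmod_eq_0 in E1; apply Cmod_eq_0 in E2.
    destruct X as [a b]; simpl in *; subst; reflexivity. }
  assert (Hbd : forall t, S D X t -> m <= 2 * M * t).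
  { intros t [Ht HDt]. destruct (HM _ HDt) as [A B]. unfold c2scal in A, B; simpl in A, B.
    apply Cmod_fst_le in A; auto. apply Cmod_fst_le in B; auto. unfold m. replace (2 * M * t) with (M * t + M * t) by ring. apply Rplus_le_compat; [exact A | exact B]. }
  assert (HMp : 0 < M).
  { pose proof (Hbd _ Ht0) as H. destruct Ht0 as [Ht0p _].
    destruct (Rle_or_lt M 0); auto. nra. }
  assert (H3 : Rbar_le (Finite (m / (2 * M))) (Finite g)).
  { apply Hc. intros t Ht. simpl. pose proof (Hbd _ Ht).
    apply Rmult_le_reg_r with (2 * M); [lra|]. replace (m / (2 * M) * (2 * M)) with m by (field; lra). lra. }
  simpl in H3. assert (0 < m / (2 * M)) by (apply Rdiv_lt_0_compat; lra). lra.
Qed.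

Lemma Glb_scale (P : R -> Prop) (r g : R) : 0 < r -> is_glb_Rbar P (Finite g) ->
  is_glb_Rbar (fun t => P (t / r)) (Finite (r * g)).
Proof.
  intros Hr [Hlb Hgr]. split.
  - intros t Ht. pose proof (Hlb _ Ht) as H. simpl in *.
    apply Rmult_le_compat_l with (r := r) in H; [|lra].
    replace (r * (t / r)) with t in H by (field; lra). exact H.
  - intros b Hb. destruct b as [b| |]; simpl.
    + assert (Hl : is_lb_Rbar P (Finite (b / r))).
      { intros x Hx. simpl. assert (Hx' : P ((r * x) / r)).
        { replace (r * x / r) with x by (field; lra). exact Hx. }
        pose proof (Hb _ Hx') as H. simpl in H.
        apply Rmult_le_reg_r with r; auto. replace (b / r * r) with b by (field; lra). lra. }
      pose proof (Hgr _ Hl) as H. simpl in H.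
      apply Rmult_le_compat_l with (r := r) in H; [|lra].
      replace (r * (b / r)) with b in H by (field; lra). exact H.
    + assert (Hl : is_lb_Rbar P p_infty).
      { intros x Hx. assert (Hx' : P ((r * x) / r)).
        { replace (r * x / r) with x by (field; lra). exact Hx. }
        pose proof (Hb _ Hx') as H. simpl in H. contradiction. }
      pose proof (Hgr _ Hl) as H. simpl in H. exact H.
    + exact I.
Qed.

Lemma scal_ident (c : C) (r t : R) (X : C2) : r <> 0 -> t <> 0 ->
  c2scal (RtoC (/ t)) (c2scal c X) = c2scal (c * RtoC (/ r))%C (c2scal (RtoC (/ (t / r))) X).
Proof.
  intros Hr Ht. rewrite !c2scal_scal. f_equal.
  destruct c as [a b]. unfold Cmult, RtoC; simpl. apply injective_projections; simpl; field; auto.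
Qed.

Lemma mu_scal D X (c : C) g : balanced D -> c <> 0%C -> is_glb_Rbar (S D X) (Finite g) ->
  is_glb_Rbar (S D (c2scal c X)) (Finite (Cmod c * g)).
Proof.
  intros HB Hc Hg.
  pose proof (proj1 (Cmod_gt_0 c) Hc) as Hr.
  apply is_glb_Rbar_eqset with (E1 := fun t => S D X (t / Cmod c)).
  2: apply Glb_scale; auto.
  intros t. unfold S.
  assert (Hu : Cmod (c * RtoC (/ Cmod c))%C = 1).
  { rewrite Cmod_mult, Cmod_R, Rabs_pos_eq by (left; apply Rinv_0_lt_compat; auto). field; lra. }
  split.
  - intros [Ht HD]. split. apply Rdiv_lt_0_compat; auto.
    rewrite scal_ident with (r := Cmod c) in HD by lra. eapply bal_unit; eauto.
  - intros [Ht HD]. assert (Htp : 0 < t).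
    { apply Rmult_lt_compat_r with (r := Cmod c) in Ht; auto.
      replace (t / Cmod c * Cmod c) with t in Ht by (field; lra). lra. }
    split; auto. rewrite scal_ident with (r := Cmod c) by lra. apply HB; auto. lra.
Qed.

Lemma mink_val D X g : is_glb_Rbar (S D X) (Finite g) -> minkowski D X = Finite g.
Proof. intros H. unfold minkowski. apply is_glb_Rbar_unique. exact H. Qed.

Lemma mink_glb D X : is_glb_Rbar (S D X) (minkowski D X).
Proof. apply Glb_Rbar_correct. Qed.


Definition c2sub (X Y : C2) : C2 := c2add X (c2scal (-1)%C Y).

Lemma T_add T X Y : R_linear T -> T (c2add X Y) = c2add (T X) (T Y).
Proof. intros [H _]; auto. Qed.
Lemma T_real T (r : R) X : R_linear T -> T (c2scal (RtoC r) X) = c2scal (RtoC r) (T X).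
Proof. intros [_ H]; auto. Qed.

Lemma RtoC_m1 : RtoC (-1) = (-1)%C.
Proof. apply injective_projections; simpl; ring. Qed.

Lemma T_sub T X Y : R_linear T -> T (c2sub X Y) = c2sub (T X) (T Y).
Proof. intros HT. unfold c2sub. rewrite T_add by auto. rewrite T_real by auto. reflexivity. Qed.

Lemma T_zero T : R_linear T -> T c2zero = c2zero.
Proof.
  intros HT. assert (E : c2zero = c2scal (RtoC 0) c2zero).
  { unfold c2scal, c2zero; apply c2_ext; simpl; apply injective_projections; simpl; ring. }
  rewrite E, T_real; auto. unfold c2scal; apply c2_ext; simpl; apply injective_projections; simpl; ring.
Qed.

Lemma decomp_i (c : C) X : c2scal c X = c2add (c2scal (RtoC (Re c)) X) (c2scal (RtoC (Im c)) (c2scal Ci X)).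
Proof.
  destruct c as [a b]. destruct X as [[x1 y1] [x2 y2]]. unfold c2scal, c2add, Cmult, Cplus, RtoC, Ci, Re, Im; simpl.
  apply c2_ext; simpl; apply injective_projections; simpl; ring.
Qed.

Lemma T_scalC T (c : C) X : R_linear T ->
  T (c2scal c X) = c2add (c2scal (RtoC (Re c)) (T X)) (c2scal (RtoC (Im c)) (T (c2scal Ci X))).
Proof. intros HT. rewrite (decomp_i c X). rewrite T_add by auto. rewrite !T_real by auto. reflexivity. Qed.

Lemma sub_zero X Y : c2sub X Y = c2zero -> X = Y.
Proof.
  destruct X as [a b], Y as [c d]. intros H.
  pose proof (f_equal fst H) as H1. pose proof (f_equal snd H) as H2.
  cbn [fst snd c2add c2scal c2sub c2zero] in H1, H2.
  assert (@eq C a c). { replace a with (a + -1 * c + c)%C by ring. rewrite H1. ring. }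
  assert (@eq C b d). { replace b with (b + -1 * d + d)%C by ring. rewrite H2. ring. }
  subst; auto.
Qed.

Lemma T_inj0 D1 D2 T : is_domain D1 -> bounded_set D1 -> balanced D1 ->
  is_domain D2 -> bounded_set D2 -> balanced D2 -> R_linear T ->
  (forall X, minkowski D1 X = minkowski D2 (T X)) -> forall X, T X = c2zero -> X = c2zero.
Proof.
  intros HD1 Hb1 HB1 HD2 Hb2 HB2 HT Hmu X HX.
  destruct (Classical_Prop.classic (X = c2zero)) as [E|NE]; [exact E|exfalso].
  destruct (mu_fin D1 X HD1 Hb1 HB1) as [g [Hg [_ Hpos]]].
  specialize (Hpos NE).
  destruct (mu_fin D2 c2zero HD2 Hb2 HB2) as [g' [Hg' _]].
  pose proof (Hmu X) as E. rewrite HX, (mink_val _ _ _ Hg), (mink_val _ _ _ Hg') in E.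
  injection E as E. subst g'.
  assert (H2 : (RtoC 2) <> 0%C).
  { intros H. injection H as H. lra. }
  pose proof (mu_scal D2 c2zero (RtoC 2) g HB2 H2 Hg') as H3.
  assert (E2 : c2scal (RtoC 2) c2zero = c2zero).
  { unfold c2scal, c2zero; apply c2_ext; simpl; apply injective_projections; simpl; ring. }
  rewrite E2 in H3. apply mink_val in H3. apply mink_val in Hg'. rewrite Hg' in H3.
  injection H3 as H3. rewrite Cmod_R, Rabs_pos_eq in H3 by lra. lra.
Qed.


Definition subsp (A : C2 -> Prop) :=
  (forall X Y, A X -> A Y -> A (c2add X Y)) /\ (forall (c : C) X, A X -> A (c2scal c X)).
Definition disj (A B : C2 -> Prop) := forall Y, A Y -> B Y -> Y = c2zero.

Lemma scal0 X : c2scal 0%C X = c2zero.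
Proof. unfold c2zero. c2ring. Qed.

Lemma line_subsp L : complex_line L -> subsp L.
Proof.
  intros [v [Hv HL]]. split.
  - intros X Y HX HY. apply HL in HX as [a ->]. apply HL in HY as [b ->].
    apply HL. exists (a + b)%C. c2ring.
  - intros c X HX. apply HL in HX as [a ->]. apply HL. exists (c * a)%C. c2ring.
Qed.

Lemma line_disj L L' : complex_line L -> complex_line L' -> L <> L' -> disj L L'.
Proof.
  intros [v [Hv HL]] [w [Hw HL']] Hne Y HY HY'.
  apply NNPP; intros HY0. apply Hne.
  destruct (proj1 (HL Y) HY) as [a Ha]. destruct (proj1 (HL' Y) HY') as [b Hb].
  assert (Ha0 : a <> 0%C). { intros E; apply HY0; rewrite Ha, E; apply scal0. }
  assert (Hb0 : b <> 0%C). { intros E; apply HY0; rewrite Hb, E; apply scal0. }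
  apply functional_extensionality; intros X; apply propositional_extensionality.
  rewrite HL, HL'. split.
  - intros [l ->]. exists (l / a * b)%C. rewrite <- c2scal_scal, <- Hb, Ha, c2scal_scal.
    f_equal. field. auto.
  - intros [l ->]. exists (l / b * a)%C. rewrite <- c2scal_scal, <- Ha, Hb, c2scal_scal.
    f_equal. field. auto.
Qed.

Definition U3 (A B C : C2 -> Prop) X := A X \/ B X \/ C X.

Lemma step1_aux A B C Y Z : subsp A -> subsp B -> subsp C -> disj A B -> disj A C -> disj B C ->
  A Y -> Y <> c2zero -> B Z -> U3 A B C (c2add Y Z) -> U3 A B C (c2sub Y Z) -> A Z.
Proof.
  intros [aA sA] [aB sB] [aC sC] dAB dAC dBC HY HY0 HZ Hp Hm.
  destruct Hp as [Hp|[Hp|Hp]].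
  - replace Z with (c2add (c2add Y Z) (c2scal (-1)%C Y)) by c2ring. auto.
  - exfalso; apply HY0, dAB; auto.
    replace Y with (c2add (c2add Y Z) (c2scal (-1)%C Z)) by c2ring. auto.
  - destruct Hm as [Hm|[Hm|Hm]].
    + replace Z with (c2scal (-1)%C (c2add (c2sub Y Z) (c2scal (-1)%C Y))) by (unfold c2sub; c2ring). auto.
    + exfalso; apply HY0, dAB; auto.
      replace Y with (c2add (c2sub Y Z) Z) by (unfold c2sub; c2ring). auto.
    + exfalso; apply HY0, dAC; auto.
      replace Y with (c2scal (/2)%C (c2add (c2add Y Z) (c2sub Y Z))) by (unfold c2sub; apply c2_ext; cbn [fst snd c2add c2scal c2zero]; field). auto.
Qed.

Lemma step1 A B C Y Z : subsp A -> subsp B -> subsp C -> disj A B -> disj A C -> disj B C ->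
  A Y -> Y <> c2zero -> U3 A B C Z -> U3 A B C (c2add Y Z) -> U3 A B C (c2sub Y Z) -> A Z.
Proof.
  intros sA sB sC dAB dAC dBC HY HY0 HZ Hp Hm.
  destruct HZ as [HZ|[HZ|HZ]]; auto.
  - eapply step1_aux with (B := B) (C := C); eauto.
  - assert (dCB : disj C B) by (intros W H1 H2; apply dBC; auto).
    eapply step1_aux with (B := C) (C := B); eauto.
    + destruct Hp as [?|[?|?]]; unfold U3; tauto.
    + destruct Hm as [?|[?|?]]; unfold U3; tauto.
Qed.


Definition kap (s : bool) (c : C) : C := if s then c else Cconj c.

Lemma mink_scal_val D X (c : C) (g : R) : balanced D -> c <> 0%C -> minkowski D X = Finite g ->
  minkowski D (c2scal c X) = Finite (Cmod c * g).
Proof.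
  intros HB Hc HX. apply mink_val. apply mu_scal; auto. pose proof (mink_glb D X) as H; rewrite HX in H; exact H.
Qed.

Lemma scalz (c : C) : c2scal c c2zero = c2zero.
Proof. unfold c2zero. c2ring. Qed.

Lemma Cmod_Ci : Cmod Ci = 1.
Proof. unfold Cmod, Ci; cbn [fst snd]. replace (0 ^ 2 + 1 ^ 2) with 1 by ring. apply sqrt_1. Qed.

Lemma beta_pm (b : C) : Cmod b = 1 -> Cmod (1 + b)%C = Cmod (1 + Ci)%C -> b = Ci \/ b = Cconj Ci.
Proof.
  destruct b as [p q]. unfold Cmod, Cplus, Ci, Cconj, RtoC; cbn [fst snd]. intros H1 H2.
  assert (E1 : p ^ 2 + q ^ 2 = 1).
  { rewrite <- (sqrt_sqrt (p ^ 2 + q ^ 2)) by nra. rewrite H1. ring. }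
  assert (E2 : (1 + p) ^ 2 + (0 + q) ^ 2 = 2).
  { rewrite <- (sqrt_sqrt ((1 + p) ^ 2 + (0 + q) ^ 2)) by nra. rewrite H2.
    rewrite sqrt_sqrt by nra. ring. }
  assert (Hp : p = 0) by nra. subst p.
  assert (Hq : (q - 1) * (q + 1) = 0) by nra.
  apply Rmult_integral in Hq as [Hq|Hq].
  - left. apply injective_projections; simpl; lra.
  - right. apply injective_projections; simpl; lra.
Qed.

Lemma step2 D1 D2 T X v (b : C) : is_domain D1 -> bounded_set D1 -> balanced D1 ->
  is_domain D2 -> bounded_set D2 -> balanced D2 -> R_linear T ->
  (forall X, minkowski D1 X = minkowski D2 (T X)) ->
  T X = v -> v <> c2zero -> T (c2scal Ci X) = c2scal b v -> b = Ci \/ b = Cconj Ci.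
Proof.
  intros HD1 Hb1 HB1 HD2 Hb2 HB2 HT Hmu HX Hv Hi.
  pose proof (T_inj0 D1 D2 T HD1 Hb1 HB1 HD2 Hb2 HB2 HT Hmu) as Hinj.
  assert (HX0 : X <> c2zero).
  { intros E. apply Hv. rewrite <- HX, E. apply T_zero; auto. }
  destruct (mu_fin D1 X HD1 Hb1 HB1) as [g [Hg [_ Hpos]]]. specialize (Hpos HX0).
  apply mink_val in Hg.
  assert (Hg2 : minkowski D2 v = Finite g) by (rewrite <- HX, <- Hmu; auto).
  assert (Hi0 : Ci <> 0%C). { intros E. injection E as E. lra. }
  assert (Hb0 : b <> 0%C).
  { intros E. apply HX0. rewrite E, scal0 in Hi. apply Hinj in Hi.
    replace X with (c2scal (- Ci)%C (c2scal Ci X)) by (apply c2_ext; cbn [fst snd c2scal];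
      apply injective_projections; simpl; ring).
    rewrite Hi. apply scalz. }
  assert (Hmi := Hmu (c2scal Ci X)).
  rewrite (mink_scal_val D1 X Ci g HB1 Hi0 Hg), Hi, (mink_scal_val D2 v b g HB2 Hb0 Hg2), Cmod_Ci in Hmi.
  injection Hmi as Hmi.
  assert (Hbm : Cmod b = 1) by nra.
  assert (Hc0 : (1 + Ci)%C <> 0%C). { intros E. injection E as E. lra. }
  assert (E1 : c2scal (1 + Ci)%C X = c2add X (c2scal Ci X)) by c2ring.
  assert (E2 : T (c2scal (1 + Ci)%C X) = c2scal (1 + b)%C v).
  { rewrite E1, T_add, Hi, HX by auto. c2ring. }
  assert (H1b : (1 + b)%C <> 0%C).
  { intros E. apply HX0. rewrite E, scal0 in E2. apply Hinj in E2.
    replace X with (c2scal (/ (1 + Ci))%C (c2scal (1 + Ci)%C X)).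
    - rewrite E2. apply scalz.
    - rewrite c2scal_scal, Cinv_l by auto. c2ring. }
  assert (Hm2 := Hmu (c2scal (1 + Ci)%C X)).
  rewrite (mink_scal_val D1 X _ g HB1 Hc0 Hg), E2, (mink_scal_val D2 v _ g HB2 H1b Hg2) in Hm2.
  injection Hm2 as Hm2.
  apply beta_pm; auto. nra.
Qed.

Lemma kap_ident s (c : C) v :
  c2add (c2scal (RtoC (Re c)) v) (c2scal (RtoC (Im c)) (c2scal (kap s Ci) v)) = c2scal (kap s c) v.
Proof.
  destruct c as [a b], v as [[x1 y1] [x2 y2]].
  destruct s; unfold kap, c2add, c2scal, Cmult, Cplus, RtoC, Ci, Cconj, Re, Im; simpl;
  apply c2_ext; simpl; apply injective_projections; simpl; ring.
Qed.

Lemma line_coord A v Z : complex_line A -> A v -> v <> c2zero -> A Z -> exists b, Z = c2scal b v.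
Proof.
  intros [w [Hw HA]] Hv Hv0 HZ.
  apply HA in Hv as [a Ha]. apply HA in HZ as [z Hz].
  assert (Ha0 : a <> 0%C). { intros E. apply Hv0. rewrite Ha, E. apply scal0. }
  exists (z / a)%C. rewrite Hz, Ha, c2scal_scal. f_equal. field. auto.
Qed.

Lemma line_step D1 D2 T (U1 A B CC : C2 -> Prop) v :
  is_domain D1 -> bounded_set D1 -> balanced D1 ->
  is_domain D2 -> bounded_set D2 -> balanced D2 -> R_linear T ->
  (forall X, minkowski D1 X = minkowski D2 (T X)) ->
  (forall (c : C) X, U1 X -> U1 (c2scal c X)) ->
  complex_line A -> complex_line B -> complex_line CC -> A <> B -> A <> CC -> B <> CC ->
  (forall Y, U3 A B CC Y <-> exists X, U1 X /\ T X = Y) ->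
  A v -> v <> c2zero ->
  exists X s, T X = v /\ forall c, T (c2scal c X) = c2scal (kap s c) v.
Proof.
  intros HD1 Hb1 HB1 HD2 Hb2 HB2 HT Hmu HU lA lB lC nAB nAC nBC Hs Hv Hv0.
  destruct (proj1 (Hs v) (or_introl Hv)) as [X [HUX HX]].
  assert (HZ : U3 A B CC (T (c2scal Ci X))) by (apply Hs; exists (c2scal Ci X); auto).
  assert (Hp : U3 A B CC (c2add v (T (c2scal Ci X)))).
  { apply Hs. exists (c2scal (1 + Ci)%C X). split; auto.
    rewrite <- HX, <- T_add by auto. f_equal. c2ring. }
  assert (Hm : U3 A B CC (c2sub v (T (c2scal Ci X)))).
  { apply Hs. exists (c2scal (1 - Ci)%C X). split; auto.
    rewrite <- HX, <- T_sub by auto. f_equal. unfold c2sub. c2ring. }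
  assert (HAZ : A (T (c2scal Ci X))).
  { eapply step1 with (B := B) (C := CC); eauto using line_subsp, line_disj. }
  destruct (line_coord A v _ lA Hv Hv0 HAZ) as [b Hb].
  destruct (step2 D1 D2 T X v b HD1 Hb1 HB1 HD2 Hb2 HB2 HT Hmu HX Hv0 Hb) as [E|E].
  - exists X, true. split; auto. intros c. rewrite T_scalC, HX, Hb, E by auto.
    apply (kap_ident true).
  - exists X, false. split; auto. intros c. rewrite T_scalC, HX, Hb, E by auto.
    apply (kap_ident false).
Qed.


Ltac cfix := match goal with |- ?a = ?b => change (@eq C a b) end.

Definition det (a b : C2) : C := (fst a * snd b - snd a * fst b)%C.

Lemma dec1 (u1 u2 w1 w2 y1 y2 : C) : (u1 * w2 - u2 * w1)%C <> 0%C ->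
  y1 = ((y1 * w2 - y2 * w1) / (u1 * w2 - u2 * w1) * u1 + (u1 * y2 - u2 * y1) / (u1 * w2 - u2 * w1) * w1)%C.
Proof. intros. field. auto. Qed.
Lemma dec2 (u1 u2 w1 w2 y1 y2 : C) : (u1 * w2 - u2 * w1)%C <> 0%C ->
  y2 = ((y1 * w2 - y2 * w1) / (u1 * w2 - u2 * w1) * u2 + (u1 * y2 - u2 * y1) / (u1 * w2 - u2 * w1) * w2)%C.
Proof. intros. field. auto. Qed.

Lemma decomp v1 v2 Y : det v1 v2 <> 0%C ->
  Y = c2add (c2scal (det Y v2 / det v1 v2)%C v1) (c2scal (det v1 Y / det v1 v2)%C v2).
Proof.
  intros Hd. unfold det in *. apply c2_ext; cbn [fst snd c2add c2scal].
  - apply dec1; auto.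
  - apply dec2; auto.
Qed.

Lemma indep v1 v2 p q : det v1 v2 <> 0%C ->
  c2add (c2scal p v1) (c2scal q v2) = c2zero -> p = 0%C /\ q = 0%C.
Proof.
  intros Hd H. pose proof (f_equal fst H) as H1. pose proof (f_equal snd H) as H2.
  cbn [fst snd c2add c2scal c2zero] in H1, H2. unfold det in Hd.
  split.
  - replace p with (((p * fst v1 + q * fst v2) * snd v2 - (p * snd v1 + q * snd v2) * fst v2)
       / (fst v1 * snd v2 - snd v1 * fst v2))%C by (field; auto).
    rewrite H1, H2. field; auto.
  - replace q with (((p * snd v1 + q * snd v2) * fst v1 - (p * fst v1 + q * fst v2) * snd v1)
       / (fst v1 * snd v2 - snd v1 * fst v2))%C by (field; auto).
    rewrite H1, H2. field; auto.
Qed.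

Lemma det_nz A B v1 v2 : subsp A -> disj A B -> A v1 -> B v2 -> v1 <> c2zero -> v2 <> c2zero ->
  det v1 v2 <> 0%C.
Proof.
  intros [_ sA] dAB H1 H2 Hv1 Hv2 Hd. unfold det in Hd. apply Hv2, dAB; auto.
  destruct (classic (@eq C (fst v1) 0%C)) as [E|E].
  - assert (E' : ~ @eq C (snd v1) 0%C).
    { intros E'. apply Hv1. destruct v1 as [a b]; cbn in *; subst; reflexivity. }
    replace v2 with (c2scal (snd v2 / snd v1)%C v1). apply sA; auto.
    apply c2_ext; cbn [fst snd c2scal].
    + rewrite E. assert (F : (snd v1 * fst v2)%C = 0%C).
      { rewrite E in Hd. replace (snd v1 * fst v2)%C with (- (0 * snd v2 - snd v1 * fst v2))%C by ring.
        rewrite Hd. ring. }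
      replace (fst v2) with (snd v1 * fst v2 / snd v1)%C by (field; auto). rewrite F. field; auto.
    + field; auto.
  - replace v2 with (c2scal (fst v2 / fst v1)%C v1). apply sA; auto.
    apply c2_ext; cbn [fst snd c2scal].
    + field; auto.
    + replace (snd v2) with (fst v1 * snd v2 / fst v1)%C by (field; auto).
      replace (fst v1 * snd v2)%C with (fst v1 * snd v2 - snd v1 * fst v2 + snd v1 * fst v2)%C by ring.
      rewrite Hd. field; auto.
Qed.

Lemma kap_kap s c : kap s (kap s c) = c.
Proof. destruct s; simpl; auto. apply Cconj_conj. Qed.
Lemma kap_mult s a b : kap s (a * b)%C = (kap s a * kap s b)%C.
Proof. destruct s; simpl; auto. apply Cmult_conj. Qed.

Lemma T_comb T s1 s2 X1 X2 v1 v2 p q : R_linear T ->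
  (forall c, T (c2scal c X1) = c2scal (kap s1 c) v1) ->
  (forall c, T (c2scal c X2) = c2scal (kap s2 c) v2) ->
  T (c2add (c2scal p X1) (c2scal q X2)) = c2add (c2scal (kap s1 p) v1) (c2scal (kap s2 q) v2).
Proof. intros HT F1 F2. rewrite T_add by auto. rewrite F1, F2. reflexivity. Qed.

Lemma global T s X1 X2 v1 v2 : R_linear T -> (forall X Y, T X = T Y -> X = Y) ->
  (forall c, T (c2scal c X1) = c2scal (kap s c) v1) ->
  (forall c, T (c2scal c X2) = c2scal (kap s c) v2) ->
  det v1 v2 <> 0%C ->
  forall l X, T (c2scal l X) = c2scal (kap s l) (T X).
Proof.
  intros HT Hinj F1 F2 Hd l X.
  set (p := (det (T X) v2 / det v1 v2)%C). set (q := (det v1 (T X) / det v1 v2)%C).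
  assert (HX : T X = c2add (c2scal p v1) (c2scal q v2)) by (apply decomp; auto).
  assert (E : X = c2add (c2scal (kap s p) X1) (c2scal (kap s q) X2)).
  { apply Hinj. rewrite (T_comb T s s X1 X2 v1 v2) by auto. rewrite !kap_kap. exact HX. }
  rewrite E.
  replace (c2scal l (c2add (c2scal (kap s p) X1) (c2scal (kap s q) X2)))
    with (c2add (c2scal (l * kap s p)%C X1) (c2scal (l * kap s q)%C X2)) by c2ring.
  rewrite (T_comb T s s X1 X2 v1 v2) by auto.
  rewrite <- E, HX, !kap_mult, !kap_kap. c2ring.
Qed.


Lemma Ci_conj : Ci <> Cconj Ci.
Proof. intros H. injection H as H. lra. Qed.

Lemma mul_nz_eq (x y a : C) : a <> 0%C -> ((x - y) * a)%C = 0%C -> x = y.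
Proof.
  intros Ha H. assert (E : (x - y)%C = 0%C).
  { replace (x - y)%C with ((x - y) * a / a)%C by (field; auto). rewrite H. field; auto. }
  replace x with ((x - y) + y)%C by ring. rewrite E. ring.
Qed.

Lemma signs T s1 s2 s3 X1 X2 X3 v1 v2 v3 : R_linear T -> (forall X Y, T X = T Y -> X = Y) ->
  (forall c, T (c2scal c X1) = c2scal (kap s1 c) v1) ->
  (forall c, T (c2scal c X2) = c2scal (kap s2 c) v2) ->
  (forall c, T (c2scal c X3) = c2scal (kap s3 c) v3) ->
  T X3 = v3 ->
  det v1 v2 <> 0%C -> (forall b, v3 <> c2scal b v2) -> (forall a, v3 <> c2scal a v1) ->
  s1 = s2.
Proof.
  intros HT Hinj F1 F2 F3 HX3 Hd N1 N2.
  set (a := (det v3 v2 / det v1 v2)%C). set (b := (det v1 v3 / det v1 v2)%C).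
  assert (Hv3 : v3 = c2add (c2scal a v1) (c2scal b v2)) by (apply decomp; auto).
  assert (Ha : a <> 0%C).
  { intros E. apply (N1 b). rewrite Hv3 at 1. rewrite E. unfold c2zero; c2ring. }
  assert (Hb : b <> 0%C).
  { intros E. apply (N2 a). rewrite Hv3 at 1. rewrite E. unfold c2zero; c2ring. }
  set (X' := c2add (c2scal (kap s1 a) X1) (c2scal (kap s2 b) X2)).
  assert (E : X3 = X').
  { apply Hinj. unfold X'. rewrite (T_comb T s1 s2 X1 X2 v1 v2) by auto. rewrite !kap_kap, HX3. exact Hv3. }
  assert (G := F3 Ci). rewrite E in G.
  replace (c2scal Ci X') with (c2add (c2scal (Ci * kap s1 a)%C X1) (c2scal (Ci * kap s2 b)%C X2)) in G
    by (unfold X'; c2ring).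
  rewrite (T_comb T s1 s2 X1 X2 v1 v2), !kap_mult, !kap_kap, Hv3 in G by auto.
  assert (Z : c2add (c2scal ((kap s3 Ci - kap s1 Ci) * a)%C v1) (c2scal ((kap s3 Ci - kap s2 Ci) * b)%C v2) = c2zero).
  { transitivity (c2sub (c2scal (kap s3 Ci) (c2add (c2scal a v1) (c2scal b v2)))
                        (c2add (c2scal (kap s1 Ci * a)%C v1) (c2scal (kap s2 Ci * b)%C v2))).
    - unfold c2sub; c2ring.
    - rewrite G. unfold c2sub, c2zero; c2ring. }
  apply indep in Z as [Z1 Z2]; auto.
  apply mul_nz_eq in Z1; auto. apply mul_nz_eq in Z2; auto.
  destruct s1, s2, s3; simpl in Z1, Z2; auto; exfalso; apply Ci_conj; congruence.
Qed.


Lemma line_pt L : complex_line L -> exists v, L v /\ v <> c2zero.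
Proof. intros [v [Hv HL]]. exists v. split; auto. apply HL. exists 1%C. symmetry; apply c2_ext; apply Cmult_1_l. Qed.

Theorem lemma5 (D1 D2 : C2 -> Prop)
  (L11 L12 L13 L21 L22 L23 : C2 -> Prop) (T : C2 -> C2) :
  is_domain D1 -> bounded_set D1 -> balanced D1 ->
  is_domain D2 -> bounded_set D2 -> balanced D2 ->
  complex_line L11 -> complex_line L12 -> complex_line L13 ->
  L11 <> L12 -> L11 <> L13 -> L12 <> L13 ->
  complex_line L21 -> complex_line L22 -> complex_line L23 ->
  L21 <> L22 -> L21 <> L23 -> L22 <> L23 ->
  R_linear T ->
  (forall X, minkowski D1 X = minkowski D2 (T X)) ->
  (forall Y, (L21 Y \/ L22 Y \/ L23 Y) <->
             exists X, (L11 X \/ L12 X \/ L13 X) /\ T X = Y) ->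
  C_linear T \/ anti_C_linear T.
Proof.
  intros HD1 Hb1 HB1 HD2 Hb2 HB2 l11 l12 l13 n112 n113 n123 l21 l22 l23 n12 n13 n23 HT Hmu Hs.
  assert (Hinj : forall X Y, T X = T Y -> X = Y).
  { intros X Y E. apply sub_zero. apply (T_inj0 D1 D2 T); auto.
    rewrite T_sub, E by auto. unfold c2sub, c2zero; c2ring. }
  set (U1 := fun X => L11 X \/ L12 X \/ L13 X).
  assert (HU : forall (c : C) X, U1 X -> U1 (c2scal c X)).
  { intros c X [H|[H|H]]; [left|right;left|right;right]; apply line_subsp; auto. }
  destruct (line_pt L21 l21) as [v1 [Hv1 Hv10]].
  destruct (line_pt L22 l22) as [v2 [Hv2 Hv20]].
  destruct (line_pt L23 l23) as [v3 [Hv3 Hv30]].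
  destruct (line_step D1 D2 T U1 L21 L22 L23 v1 HD1 Hb1 HB1 HD2 Hb2 HB2 HT Hmu HU
              l21 l22 l23 n12 n13 n23 Hs Hv1 Hv10) as [X1 [s1 [HX1 F1]]].
  destruct (line_step D1 D2 T U1 L22 L21 L23 v2 HD1 Hb1 HB1 HD2 Hb2 HB2 HT Hmu HU
              l22 l21 l23 (not_eq_sym n12) n23 n13) as [X2 [s2 [HX2 F2]]]; auto.
  { intros Y. unfold U1. rewrite <- Hs. unfold U3. tauto. }
  destruct (line_step D1 D2 T U1 L23 L21 L22 v3 HD1 Hb1 HB1 HD2 Hb2 HB2 HT Hmu HU
              l23 l21 l22 (not_eq_sym n13) (not_eq_sym n23) n12) as [X3 [s3 [HX3 F3]]]; auto.
  { intros Y. unfold U1. rewrite <- Hs. unfold U3. tauto. }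
  assert (Hd : det v1 v2 <> 0%C).
  { apply (det_nz L21 L22); auto. apply line_subsp; auto. apply line_disj; auto. }
  assert (Hs12 : s1 = s2).
  { apply (signs T s1 s2 s3 X1 X2 X3 v1 v2 v3); auto.
    - intros b E. apply Hv30. apply (line_disj L22 L23); auto.
      rewrite E. apply line_subsp; auto.
    - intros a E. apply Hv30. apply (line_disj L21 L23); auto.
      rewrite E. apply line_subsp; auto. }
  subst s2.
  pose proof (global T s1 X1 X2 v1 v2 HT Hinj F1 F2 Hd) as G.
  destruct s1; [left|right]; split; try apply HT; intros l X; rewrite G; reflexivity.
Qed.
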